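(* The assignment $S\mapsto \mathbf{H}(S)$ on objects and $\varphi\mapsto\mathbf{H}(\varphi)$ (restriction of $\varphi$ to $S$) on morphisms is a functor from the category of finite association schemes with admissible morphisms to the category of finite hypergroups with hypergroup homomorphisms.
   Context: For a nonempty set $X$: $1_X=\{(x,x):x\in X\}$; for $p\subseteq X\times X$, $p^*=\{(a,b):(b,a)\in p\}$ and $xp=\{y\in X:(x,y)\in p\}$. An association scheme on $X$ is a partition $S$ of $X\times X$ with $1_X\in S$, $p^*\in S$ whenever $p\in S$, and such that for all $p,q,r\in S$ there is a cardinal $a_{pq}^r$ with $|yp\cap zq^*|=a_{pq}^r$ for all $y\in X$, $z\in yr$; it is finite if $X$ is finite. Complex multiplication: $pq=\{r\in S:a_{pq}^r\ge1\}$. $\mathbf{H}(S)$ is the hypergroup on $S$ with hyperoperation complex multiplication, identity $1_X$, inverse $p^*$. A hypergroup is a nonempty set $H$ with $*:H\times H\to P^*(H)$ (nonempty subsets), extended to subsets by unions, that is associative, has a unique identity $e$ ($e*x=x*e=\{x\}$), unique inverses $f^{-1}$ with $e\in(f^{-1}*f)\cap(f*f^{-1})$, and satisfies reversibility ($c\in a*b\Rightarrow a\in c*b^{-1}$ and $b\in a^{-1}*c$). A hypergroup homomorphism $f$ satisfies $f(a*b)\subseteq f(a)*f(b)$. A morphism of association schemes $S$ on $X$ to $T$ on $Y$ is $f:X\cup S\to Y\cup T$ with $f(X)\subseteq Y$, $f(S)\subseteq T$, and $(f(x),f(y))\in f(p)$ for all $(x,y)\in p\in S$; it is admissible if whenever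 $(f(x),y)\in f(p)$ ($x\in X,y\in Y,p\in S$) there is $z\in X$ with $(x,z)\in p$ and $f(z)=y$. *)

(* Defs.v *)
From mathcomp Require Import all_boot.
Set Implicit Arguments. Unset Strict Implicit. Unset Printing Implicit Defensive.

Section Hypergroup.
Variable U : finType.

Definition setop (op : U -> U -> {set U}) (B C : {set U}) : {set U} :=
  \bigcup_(b in B) \bigcup_(c in C) op b c.

Definition is_hypergroup (A : {set U}) (op : U -> U -> {set U}) (e : U)
    (inv : U -> U) : Prop :=
  [/\ A != set0,
      {in A &, forall a b, op a b \subset A /\ op a b != set0},
      {in A & &, forall a b c, setop op (op a b) [set c] = setop op [set a] (op b c)},
      (e \in A /\ {in A, forall x, op e x = [set x] /\ op x e = [set x]}
      /\ {in A, forall e', {in A, forall x, op e' x = [set x] /\ op x e' = [set x]}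
                           -> e' = e}) /\
      ({in A, forall f, inv f \in A /\ e \in op (inv f) f :&: op f (inv f)}
      /\ {in A &, forall f g, e \in op g f :&: op f g -> g = inv f}) &
      {in A & &, forall a b c, c \in op a b -> a \in op c (inv b) /\ b \in op (inv a) c}].

End Hypergroup.

Definition is_hyp_hom (U V : finType) (A : {set U}) (op : U -> U -> {set U})
    (B : {set V}) (op' : V -> V -> {set V}) (f : U -> V) : Prop :=
  {in A, forall a, f a \in B} /\
  {in A &, forall a b, f @: op a b \subset op' (f a) (f b)}.

Section Scheme.
Variable X : finType.

Definition diagX : {set X * X} := [set xy | xy.1 == xy.2].
Definition transp (p : {set X * X}) : {set X * X} := [set xy | (xy.2, xy.1) \in p].
Definition nbhd (p : {set X * X}) (x : X) : {set X} := [set y | (x, y) \in p].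

Definition inter_count (p q : {set X * X}) (y z : X) : nat :=
  #|nbhd p y :&: nbhd (transp q) z|.

Definition is_scheme (S : {set {set X * X}}) : Prop :=
  [/\ 0 < #|X|,
      partition S [set: X * X],
      diagX \in S,
      {in S, forall p, transp p \in S} &
      {in S & &, forall p q r : {set X * X}, exists a : nat,
          forall y z, (y, z) \in r -> inter_count p q y z = a}].

(* the intersection number a_pq^r (read off at any pair of r) *)
Definition inum (p q r : {set X * X}) : nat :=
  if [pick yz in r] is Some yz then inter_count p q yz.1 yz.2 else 0.

Definition cmul (S : {set {set X * X}}) (p q : {set X * X}) : {set {set X * X}} :=
  [set r in S | 0 < inum p q r].

End Scheme.

(* A morphism S -> T is a map f : X ∪ S -> Y ∪ T, given as its two components. *)
Definition is_scheme_morphism (X Y : finType) (S : {set {set X * X}})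
    (T : {set {set Y * Y}}) (fX : X -> Y) (fS : {set X * X} -> {set Y * Y}) : Prop :=
  {in S, forall p, fS p \in T} /\
  {in S, forall p : {set X * X}, forall x y, (x, y) \in p -> (fX x, fX y) \in fS p}.

Definition is_admissible (X Y : finType) (S : {set {set X * X}})
    (fX : X -> Y) (fS : {set X * X} -> {set Y * Y}) : Prop :=
  forall x y p, p \in S -> (fX x, y) \in fS p -> exists2 z, (x, z) \in p & fX z = y.

(* Main.v *)
Require Import Defs.
From mathcomp Require Import all_boot.
Set Implicit Arguments. Unset Strict Implicit. Unset Printing Implicit Defensive.

Section L.
Variable X : finType.
Variable S : {set {set X * X}}.
Hypothesis hS : is_scheme S.

Lemma blk (u : X * X) : exists2 r, r \in S & u \in r.
Proof.
case: hS => _ /and3P [/eqP hc _ _] _ _ _.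
have : u \in cover S by rewrite hc inE.
by move/bigcupP => [r Hr Hu]; exists r.
Qed.

Lemma blk_uniq (r s : {set X * X}) u : r \in S -> s \in S -> u \in r -> u \in s -> r = s.
Proof.
case: hS => _ /and3P [_ ht _] _ _ _ Hr Hs Hur Hus.
by rewrite -(def_pblock ht Hr Hur) (def_pblock ht Hs Hus).
Qed.

Lemma blk_ne (r : {set X * X}) : r \in S -> exists u, u \in r.
Proof.
case: hS => _ /and3P [_ _ h0] _ _ _ Hr.
apply/set0Pn; apply: contraNneq h0 => <-; exact: Hr.
Qed.

Lemma inumE (p q r : {set X * X}) (x z : X) : p \in S -> q \in S -> r \in S -> (x, z) \in r ->
  inum p q r = inter_count p q x z.
Proof.
case: hS => _ _ _ _ hint Hp Hq Hr Hxz.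
have [a Ha] := hint p q r Hp Hq Hr.
rewrite /inum; case: pickP => [[y w] Hyw|H]; last by rewrite H in Hxz.
by rewrite /= (Ha _ _ Hyw) (Ha _ _ Hxz).
Qed.

Lemma icP (p q : {set X * X}) (x z : X) : reflect (exists y, (x, y) \in p /\ (y, z) \in q)
  (0 < inter_count p q x z).
Proof.
rewrite /inter_count card_gt0; apply: (iffP (set0Pn _)).
  by move=> [y]; rewrite !inE /= => /andP [h1 h2]; exists y.
by move=> [y [h1 h2]]; exists y; rewrite !inE /= h1 h2.
Qed.

Lemma cmulP (p q r : {set X * X}) (x z : X) : p \in S -> q \in S -> r \in S -> (x, z) \in r ->
  (r \in cmul S p q <-> exists y, (x, y) \in p /\ (y, z) \in q).
Proof.
move=> Hp Hq Hr Hxz; rewrite /cmul inE Hr /= (inumE Hp Hq Hr Hxz).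
split; by move/icP.
Qed.

Lemma cmulS (p q r : {set X * X}) : r \in cmul S p q -> r \in S.
Proof. by rewrite inE => /andP []. Qed.

Lemma cmul_ex (p q r : {set X * X}) : p \in S -> q \in S -> r \in cmul S p q ->
  exists x y z, [/\ (x, y) \in p, (y, z) \in q & (x, z) \in r].
Proof.
move=> Hp Hq Hr; have HrS := cmulS Hr.
have [[x z] Hxz] := blk_ne HrS.
have [y [h1 h2]] := (cmulP Hp Hq HrS Hxz).1 Hr.
by exists x, y, z.
Qed.

Lemma cmul_in (p q r : {set X * X}) (x y z : X) : p \in S -> q \in S -> r \in S ->
  (x, y) \in p -> (y, z) \in q -> (x, z) \in r -> r \in cmul S p q.
Proof. move=> Hp Hq Hr h1 h2 h3; apply/(cmulP Hp Hq Hr h3); by exists y. Qed.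

Lemma diagP (u v : X) : ((u, v) \in diagX X) = (u == v).
Proof. by rewrite inE. Qed.

Lemma transpP (p : {set X * X}) (u v : X) : ((u, v) \in transp p) = ((v, u) \in p).
Proof. by rewrite inE. Qed.

Lemma total (p : {set X * X}) (y : X) : p \in S -> exists z, (y, z) \in p.
Proof.
move=> Hp; have hd : diagX X \in S by case: hS.
have htr : transp p \in S by case: hS => _ _ _ /(_ p Hp).
have [[y0 z0] H0] := blk_ne Hp.
have d0 : (y0, y0) \in diagX X by rewrite diagP.
have d1 : (y, y) \in diagX X by rewrite diagP.
have : 0 < inter_count p (transp p) y y.
  rewrite -(inumE Hp htr hd d1) (inumE Hp htr hd d0).
  by apply/icP; exists z0; rewrite transpP.
by move/icP => [z [h _]]; exists z.
Qed.

Lemma hyp : is_hypergroup S (cmul S) (diagX X) (@transp X).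
Proof.
have hd : diagX X \in S by case: hS.
have htr : {in S, forall p, transp p \in S} by case: hS.
have idl : {in S, forall x, cmul S (diagX X) x = [set x]}.
  move=> x Hx; apply/setP => r; rewrite in_set1; apply/idP/eqP.
    move=> Hr; have [a [b [c [h1 h2 h3]]]] := cmul_ex hd Hx Hr.
    move: h1; rewrite diagP => /eqP ?; subst b.
    exact: (blk_uniq (cmulS Hr) Hx h3 h2).
  move=> ->; have [[a b] Hab] := blk_ne Hx.
  by apply: (cmul_in (y := a) hd Hx Hx _ Hab Hab); rewrite diagP.
have idr : {in S, forall x, cmul S x (diagX X) = [set x]}.
  move=> x Hx; apply/setP => r; rewrite in_set1; apply/idP/eqP.
    move=> Hr; have [a [b [c [h1 h2 h3]]]] := cmul_ex Hx hd Hr.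
    move: h2; rewrite diagP => /eqP ?; subst c.
    exact: (blk_uniq (cmulS Hr) Hx h3 h1).
  move=> ->; have [[a b] Hab] := blk_ne Hx.
  by apply: (cmul_in (y := b) Hx hd Hx Hab _ Hab); rewrite diagP.
have hX : 0 < #|X| by case: hS.
split.
- have [x _] := card_gt0P hX.
  have [r Hr _] := blk (x, x); by apply/set0Pn; exists r.
- move=> a b Ha Hb; split; first by apply/subsetP => r /cmulS.
  have [[x y] Hxy] := blk_ne Ha.
  have [z Hz] := total y Hb.
  have [r Hr Hxz] := blk (x, z).
  by apply/set0Pn; exists r; apply: (cmul_in (y := y) Ha Hb Hr Hxy Hz Hxz).
- move=> a b c Ha Hb Hc; apply/setP => t; apply/bigcupP/bigcupP.
    move=> [r Hr /bigcupP [c' /set1P -> Ht]].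
    have HrS := cmulS Hr; have HtS := cmulS Ht.
    have [x [w [z [Hxw Hwz Hxz]]]] := cmul_ex HrS Hc Ht.
    have [y [Hxy Hyw]] := (cmulP Ha Hb HrS Hxw).1 Hr.
    have [s Hs Hyz] := blk (y, z).
    exists a; first exact: set11.
    apply/bigcupP; exists s; first exact: (cmul_in Hb Hc Hs Hyw Hwz Hyz).
    exact: (cmul_in Ha Hs HtS Hxy Hyz Hxz).
  move=> [a' /set1P -> /bigcupP [s Hs Ht]].
  have HsS := cmulS Hs; have HtS := cmulS Ht.
  have [x [y [z [Hxy Hyz Hxz]]]] := cmul_ex Ha HsS Ht.
  have [w [Hyw Hwz]] := (cmulP Hb Hc HsS Hyz).1 Hs.
  have [r Hr Hxw] := blk (x, w).
  exists r; first exact: (cmul_in Ha Hb Hr Hxy Hyw Hxw).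
  apply/bigcupP; exists c; first exact: set11.
  exact: (cmul_in Hr Hc HtS Hxw Hwz Hxz).
- split; [split; first exact: hd|].
    by split=> [x Hx|e' He' H]; [split; [apply: idl|apply: idr]|
      have [h _] := H _ hd; have := h; rewrite idr // => /setP /(_ e');
      rewrite !in_set1 eqxx => /esym /eqP].
  split.
    move=> f Hf; have Htf := htr f Hf; split=> //.
    have [[x y] Hxy] := blk_ne Hf.
    rewrite inE; apply/andP; split.
      by apply: (cmul_in (x := y) (y := x) (z := y) Htf Hf hd);
        rewrite ?transpP ?diagP.
    by apply: (cmul_in (x := x) (y := y) (z := x) Hf Htf hd);
      rewrite ?transpP ?diagP.
  move=> f g Hf Hg; rewrite inE => /andP [H _].
  have [x [y [z [Hxy Hyz Hxz]]]] := cmul_ex Hg Hf H.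
  move: Hxz; rewrite diagP => /eqP ?; subst z.
  by apply: (blk_uniq Hg (htr f Hf) Hxy); rewrite transpP.
- move=> a b c Ha Hb Hc H.
  have [x [y [z [Hxy Hyz Hxz]]]] := cmul_ex Ha Hb H.
  split.
    by apply: (cmul_in (y := z) Hc (htr b Hb) Ha Hxz _ Hxy); rewrite transpP.
  by apply: (cmul_in (y := x) (htr a Ha) Hc Hb _ Hxz Hyz); rewrite transpP.
Qed.
End L.
Theorem corollary3p2 :
  (* object part: H(S) is a hypergroup *)
  (forall (X : finType) (S : {set {set X * X}}),
      is_scheme S -> is_hypergroup S (cmul S) (diagX X) (@transp X))
  /\
  (* morphism part: the restriction of an admissible morphism to S is a
     hypergroup homomorphism H(S) -> H(T) *)
  (forall (X Y : finType) (S : {set {set X * X}}) (T : {set {set Y * Y}})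
          (fX : X -> Y) (fS : {set X * X} -> {set Y * Y}),
      is_scheme S -> is_scheme T ->
      is_scheme_morphism S T fX fS -> is_admissible S fX fS ->
      is_hyp_hom S (cmul S) T (cmul T) fS)
  /\
  (* functoriality: identities and composites *)
  (forall (X : finType) (S : {set {set X * X}}), is_scheme S ->
      is_scheme_morphism S S id id /\ is_admissible S (@id X) id)
  /\
  (forall (X Y Z : finType) (S : {set {set X * X}}) (T : {set {set Y * Y}})
          (W : {set {set Z * Z}})
          (fX : X -> Y) (fS : {set X * X} -> {set Y * Y})
          (gX : Y -> Z) (gS : {set Y * Y} -> {set Z * Z}),
      is_scheme S -> is_scheme T -> is_scheme W ->
      is_scheme_morphism S T fX fS -> is_admissible S fX fS ->
      is_scheme_morphism T W gX gS -> is_admissible T gX gS ->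
      is_scheme_morphism S W (gX \o fX) (gS \o fS) /\ is_admissible S (gX \o fX) (gS \o fS)
      /\ {in S, forall p, (gS \o fS) p = gS (fS p)}).
Proof.
split; first by move=> X S hS; exact: hyp.
split.
  move=> X Y S T fX fS hS hT [hm1 hm2] _; split=> // a b Ha Hb.
  apply/subsetP => _ /imsetP [r Hr ->].
  have HrS := cmulS Hr.
  have [x [y [z [Hxy Hyz Hxz]]]] := cmul_ex hS Ha Hb Hr.
  exact: (cmul_in hT (hm1 _ Ha) (hm1 _ Hb) (hm1 _ HrS) (hm2 _ Ha _ _ Hxy)
            (hm2 _ Hb _ _ Hyz) (hm2 _ HrS _ _ Hxz)).
split.
  move=> X S hS; split; first by split.
  by move=> x y p _ H; exists y.
move=> X Y Z S T W fX fS gX gS _ _ _ [f1 f2] fa [g1 g2] ga.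
split; [split|split=> //].
- by move=> p Hp; apply: g1; apply: f1.
- by move=> p Hp x y H; apply: g2; [apply: f1|apply: f2].
- move=> x y p Hp /= H.
  have [z' H1 <-] := ga _ _ _ (f1 _ Hp) H.
  have [z H2 <-] := fa _ _ _ Hp H1.
  by exists z.
Qed.
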